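(* Let $\Sigma,O$ be nominal $\mathrm{Sb}$-sets with $\dim(\Sigma)\le1$. Let $\mathcal{A}=(Q,\delta,o,q_0)$ be a nominal automaton with input alphabet $U\Sigma$ and output alphabet $UO$, and let $L\colon\Sigma^*\to O$ be the language accepted by $\mathcal{A}$. Suppose $L$ is $\mathrm{Sb}$-equivariant. Let $S\colon(U\Sigma)^{( * )}\to UO$ be the separated language accepted by the separated automaton $\mathcal{A}_*$. Then $L=\overline{S}$, where $\overline{S}\colon\Sigma^*\to O$ is the unique $\mathrm{Sb}$-equivariant function whose restriction to separated words is $S$.
   Context: Atoms $\mathbb{A}$ (countably infinite); $\mathrm{Sb}$ = monoid of functions $\mathbb{A}\to\mathbb{A}$ that are the identity outside a finite set; $\mathrm{Perm}$ its bijections. For $M\in\{\mathrm{Sb},\mathrm{Perm}\}$ a nominal $M$-set is an $M$-set whose elements $x$ have finite supports $C$ ($m_1|_C=m_2|_C\Rightarrow m_1x=m_2x$, $m_i\in M$); $\mathrm{supp}(x)$ is the least one; $\dim(X)=\max_x|\mathrm{supp}(x)|$. $U$ restricts $\mathrm{Sb}$-actions to $\mathrm{Perm}$. $x\perp y$ means disjoint supports; $A\otimes B=\{(a,b)\mid a\perp b\}$. $\Sigma^*$ is the set of words with pointwise action; $(U\Sigma)^{( * )}$ is the set of separated words (letters with pairwise disjoint supports). A nominal automaton $(Q,\delta,o,q_0)$ over input $\Sigma'$ and output $O'$ (nominal $\mathrm{Perm}$-sets) consists of a nominal $\mathrm{Perm}$-set $Q$, equivariant $\delta\colon Q\times\Sigma'\to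 Q$, equivariant $o\colon Q\to O'$, and $q_0\in Q$ with empty support; its semantics $l(x,\varepsilon)=o(x)$, $l(x,aw)=l(\delta(x,a),w)$, and its accepted language is $w\mapsto l(q_0,w)$. The separated automaton $\mathcal{A}_*=(Q,\delta|_{Q\otimes\Sigma'},o,q_0)$ has separated semantics $s$, defined on pairs $(x,w)$ with $w$ a separated word and $x\perp w$, by $s(x,\varepsilon)=o(x)$ and $s(x,aw)=s(\delta(x,a),w)$ whenever $x\perp aw$ and $a\perp w$; its accepted separated language is $w\mapsto s(q_0,w)$ on separated words. (A unique $\mathrm{Sb}$-equivariant extension $\overline{S}$ of any $\mathrm{Perm}$-equivariant $S\colon(U\Sigma)^{( * )}\to UO$ exists when $\dim\Sigma\le1$.) *)

(* Defs.v *)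
From mathcomp Require Import all_boot.
From Stdlib Require Import List.
Set Implicit Arguments. Unset Strict Implicit. Unset Printing Implicit Defensive.

Definition atom := nat.

Definition isSb (f : atom -> atom) : Prop :=
  exists F : list atom, forall a, ~ List.In a F -> f a = a.

Definition isPerm (f : atom -> atom) : Prop := isSb f /\ bijective f.

Lemma isPerm_isSb f : isPerm f -> isSb f. Proof. by case. Qed.

Definition supports (M : (atom -> atom) -> Prop) (X : Type)
  (act : (atom -> atom) -> X -> X) (C : list atom) (x : X) : Prop :=
  forall m1 m2, M m1 -> M m2 ->
    (forall a, List.In a C -> m1 a = m2 a) -> act m1 x = act m2 x.

Definition least_supp (M : (atom -> atom) -> Prop) (X : Type)
  (act : (atom -> atom) -> X -> X) (x : X) (C : list atom) : Prop :=
  supports M act C x /\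
  forall D, supports M act D x -> forall a, List.In a C -> List.In a D.

Record MSet (M : (atom -> atom) -> Prop) := {
  car :> Type;
  act : (atom -> atom) -> car -> car;
  act_id : forall x, act (fun a => a) x = x;
  act_comp : forall f g x, M f -> M g -> act (f \o g) x = act f (act g x);
  act_nominal : forall x : car, exists C, supports M act C x
}.
Arguments act {M} _ _ _.

Definition SbSet := MSet isSb.
Definition PermSet := MSet isPerm.

Definition U (X : SbSet) : PermSet.
Proof.
refine (@Build_MSet isPerm (car X) (act X) (@act_id _ X) _ _).
- by move=> f g x /isPerm_isSb Hf /isPerm_isSb Hg; apply: act_comp.
- move=> x; have [C HC] := act_nominal x; exists C.
  by move=> m1 m2 /isPerm_isSb H1 /isPerm_isSb H2; apply: HC.
Defined.

Definition dim_le1 M (X : MSet M) : Prop :=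
  forall (x : X) C, least_supp M (act X) x C ->
    forall a b, List.In a C -> List.In b C -> a = b.

Definition perp M (X Y : MSet M) (x : X) (y : Y) : Prop :=
  forall Cx Cy, least_supp M (act X) x Cx -> least_supp M (act Y) y Cy ->
    forall a, List.In a Cx -> ~ List.In a Cy.

Fixpoint separated M (X : MSet M) (w : list X) : Prop :=
  match w with
  | nil => True
  | a :: w' => (forall b, List.In b w' -> perp a b) /\ separated w'
  end.

Definition equivariant M (X Y : MSet M) (f : X -> Y) : Prop :=
  forall m x, M m -> f (act X m x) = act Y m (f x).
Definition equivariant2 M (X Y Z : MSet M) (f : X -> Y -> Z) : Prop :=
  forall m x y, M m -> f (act X m x) (act Y m y) = act Z m (f x y).

Definition word_equivariant M (X Y : MSet M) (f : list X -> Y) : Prop :=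
  forall m w, M m -> f (map (act X m) w) = act Y m (f w).

Fixpoint lsem (Q S O : Type) (delta : Q -> S -> Q) (o : Q -> O)
  (x : Q) (w : list S) : O :=
  match w with
  | nil => o x
  | a :: w' => lsem delta o (delta x a) w'
  end.

(* separated semantics s(x, w) of A_* : the same recursion
   s(x,ε)=o(x), s(x,aw)=s(δ(x,a),w), only consulted on separated w with x ⊥ w. *)
Fixpoint ssem (Q S O : Type) (delta : Q -> S -> Q) (o : Q -> O)
  (x : Q) (w : list S) : O :=
  match w with
  | nil => o x
  | a :: w' => ssem delta o (delta x a) w'
  end.

(* Main.v *)
Require Import Defs.
From mathcomp Require Import all_boot.
From Stdlib Require Import List.

Lemma In_mem (a : nat) (l : list nat) : List.In a l <-> a \in l.
Proof.
elim: l => [|b l IH] //=; rewrite seq.in_cons; split.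
- by case=> [->|/IH ->]; rewrite ?eqxx ?orbT.
- by case/orP=> [/eqP ->|/IH]; [left|right].
Qed.

Lemma le_max (a : nat) l : List.In a l -> a <= foldr maxn 0 l.
Proof.
elim: l => [|b l IH] //= [->|H]; first by rewrite leq_maxl.
by apply: leq_trans (IH H) (leq_maxr _ _).
Qed.

Lemma isSb_comp f g : isSb f -> isSb g -> isSb (f \o g).
Proof.
move=> [F HF] [G HG]; exists (F ++ G) => a Ha /=.
have HaF : ~ List.In a F by move=> H; apply: Ha; apply: in_or_app; left.
have HaG : ~ List.In a G by move=> H; apply: Ha; apply: in_or_app; right.
by rewrite HG // HF.
Qed.

Lemma supports_app (X : SbSet) B B' (y : X) :
  supports isSb (act X) B y -> supports isSb (act X) (B' ++ B) y.
Proof.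
move=> H m1 m2 H1 H2 Hag; apply: H => // a Ha; apply: Hag; apply: in_or_app; by right.
Qed.

Lemma ssem_lsem (Q S O : Type) (delta : Q -> S -> Q) (o : Q -> O) x w :
  ssem delta o x w = lsem delta o x w.
Proof. by elim: w x => //= a w IH x; rewrite IH. Qed.

Lemma sep_exists (Sigma : SbSet) (w : list Sigma) :
  exists w' : list Sigma, exists m, isSb m /\ map (act Sigma m) w' = w /\
    separated (M:=isPerm) (X:=U Sigma) w' /\
    exists B, forall y, List.In y w' -> supports isSb (act Sigma) B y.
Proof.
elim: w => [|x w [w' [m' [Hm' [Hmap [Hsep [B HB]]]]]]].
  exists nil, id; split; first by exists nil.
  by split=> //; split=> //; exists nil.
have [C HC] := act_nominal x.
pose N := (foldr maxn 0 B).+1.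
pose tau := fun a : nat => if a \in C then N + a else a.
pose m := fun a : nat => if (N <= a) && (a - N \in C) then a - N else m' a.
have Htau : isSb tau by exists C => a /In_mem Ha; rewrite /tau (negbTE (introN idP Ha)).
have Hm : isSb m.
  case: Hm' => F HF; exists (F ++ map (addn N) C) => a Ha; rewrite /m.
  case: ifP => [/andP [H1 H2]|_].
    exfalso; apply: Ha; apply: in_or_app; right.
    by apply/in_map_iff; exists (a - N); split; [rewrite subnKC|apply/In_mem].
  by apply: HF => H; apply: Ha; apply: in_or_app; left.
have HsuppB : forall a, List.In a B -> a < N by move=> a /le_max.
have Hsx' : supports isSb (act Sigma) (map (addn N) C) (act Sigma tau x).
  move=> m1 m2 H1 H2 Hag.
  rewrite -!act_comp //; apply: HC; try exact: isSb_comp.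
  move=> c Hc /=; rewrite /tau.
  have -> : c \in C by apply/In_mem.
  by apply: Hag; apply/in_map_iff; exists c.
exists (act Sigma tau x :: w'), m; split=> //; split.
  rewrite /= -Hmap; congr cons.
    rewrite -act_comp //; rewrite -[RHS](act_id x); apply: HC.
    - exact: isSb_comp.
    - by exists nil.
    move=> c Hc /=; rewrite /tau /m.
    have Hc' : c \in C by apply/In_mem.
    by rewrite Hc' leq_addr addKn Hc'.
  apply: List.map_ext_in => y Hy; apply: (HB y Hy) => //.
  move=> a Ha; rewrite /m; have := HsuppB a Ha.
  by rewrite ltnNge => /negbTE ->.
split.
  split=> //.
  move=> b Hb Cx Cy [_ Lx] [_ Ly] a Hax Hay.
  have Px : supports isPerm (act (U Sigma)) (map (addn N) C) (act Sigma tau x).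
    by move=> m1 m2 /isPerm_isSb H1 /isPerm_isSb H2; apply: Hsx'.
  have Py : supports isPerm (act (U Sigma)) B b.
    by move=> m1 m2 /isPerm_isSb H1 /isPerm_isSb H2; apply: (HB b Hb).
  have := Lx _ Px a Hax; have := Ly _ Py a Hay.
  move=> /HsuppB Hlt /in_map_iff [c [Hc _]]; move: Hlt.
  by rewrite -Hc ltnNge leq_addr.
exists (map (addn N) C ++ B) => y /= [<-|Hy].
  move=> m1 m2 H1 H2 Hag; apply: Hsx' => // a Ha; apply: Hag; apply: in_or_app; by left.
by apply: supports_app; apply: HB.
Qed.

Theorem mainTheorem10
  (Sigma O : SbSet) (hdim : dim_le1 Sigma)
  (Q : PermSet)
  (delta : Q -> U Sigma -> Q) (o : Q -> U O) (q0 : Q)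
  (hdelta : equivariant2 delta) (ho : equivariant o)
  (hq0 : supports isPerm (act Q) nil q0)
  (hL : word_equivariant (X:=Sigma) (Y:=O) (fun w => lsem delta o q0 w))
  (Sbar : list Sigma -> O)
  (hSbar_eq : word_equivariant Sbar)
  (hSbar_ext : forall w : list (U Sigma), separated w ->
                 Sbar w = ssem delta o q0 w) :
  forall w : list Sigma, lsem delta o q0 w = Sbar w.
Proof.
move=> w; have [w' [m [Hm [<- [Hsep _]]]]] := sep_exists Sigma w.
rewrite (hL m w' Hm) (hSbar_eq m w' Hm) (hSbar_ext w' Hsep) ssem_lsem //.
Qed.
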